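(* For a positive integer $k$ and $\theta>0$, define $g_k(\theta)=\frac{-ke^{-\theta}}{(1-e^{-\theta})^2}+\sum_{j=1}^{k}\frac{j^2e^{-\theta j}}{(1-e^{-\theta j})^2}$. Then $g_k$ is non-positive and increasing in $\theta$ for $\theta>4\ln(2)$. Additionally, $g_k$ is decreasing in $k$. *)

(* Defs.v *)
From Stdlib Require Import Reals.
Open Scope R_scope.

Fixpoint sum_1_to (f : nat -> R) (k : nat) : R :=
  match k with
  | O => 0
  | S k' => sum_1_to f k' + f (S k')
  end.

Definition g (k : nat) (theta : R) : R :=
  - INR k * exp (- theta) / (1 - exp (- theta)) ^ 2
  + sum_1_to (fun j => (INR j) ^ 2 * exp (- theta * INR j)
                         / (1 - exp (- theta * INR j)) ^ 2) k.

(* Main.v *)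
Require Import Defs.
From Stdlib Require Import Reals Lra Lia Psatz.
From Coquelicot Require Import Coquelicot.
Open Scope R_scope.

Lemma exp_INR a n : exp (a * INR n) = exp a ^ n.
Proof. induction n. simpl. rewrite Rmult_0_r, exp_0; ring.
rewrite S_INR, Rmult_plus_distr_l, exp_plus, IHn, Rmult_1_r. simpl; ring. Qed.

Definition F (n : nat) (t : R) := (INR n) ^ 2 * exp (- t * INR n) / (1 - exp (- t * INR n)) ^ 2.
Definition D (n : nat) (t : R) := - (INR n) ^ 3 * (exp (- t * INR n) * (1 + exp (- t * INR n))) / (1 - exp (- t * INR n)) ^ 3.

Lemma E_lt1 n t : (1 <= n)%nat -> 0 < t -> exp (- t * INR n) < 1.
Proof. intros. rewrite <- exp_0. apply exp_increasing.
assert (1 <= INR n) by (apply (le_INR 1); auto). simpl in H1. nra. Qed.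

Lemma F_deriv n t : (1 <= n)%nat -> 0 < t -> derivable_pt_lim (F n) t (D n t).
Proof. intros Hn Ht. apply is_derive_Reals. unfold F, D.
pose proof (E_lt1 n t Hn Ht). auto_derive.
- apply Rmult_integral_contrapositive_currified; [lra|]. apply Rmult_integral_contrapositive_currified; lra.
- field. lra.
Qed.
Lemma lemC y m : 0 <= y <= 1 -> INR m * y ^ m * (1 - y) <= 1 - y ^ m.
Proof. intros Hy. induction m.
- simpl. lra.
- rewrite S_INR. simpl pow.
  assert (0 <= y ^ m) by (apply pow_le; lra).
  assert (y ^ m <= 1) by (rewrite <- (pow1 m); apply pow_incr; lra).
  assert (0 <= INR m) by apply pos_INR.
  assert (INR m * (y * y ^ m) * (1 - y) <= INR m * y ^ m * (1 - y)).
  { apply Rmult_le_compat_r; [lra|]. apply Rmult_le_compat_l; auto. nra. }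
  assert ((INR m + 1) * (y * y ^ m) * (1 - y) = INR m * (y * y ^ m) * (1 - y) + y * y^m * (1 - y)) by ring.
  assert (y * y ^ m * (1 - y) <= 1 * y ^ m * (1 - y)) by (apply Rmult_le_compat_r; [lra|]; apply Rmult_le_compat_r; lra).
  lra.
Qed.

Lemma lemA y n : 0 <= y <= 1 -> INR (S n) * y ^ n * (1 - y ^ 2) <= 1 - y ^ (2 * S n).
Proof. intros Hy. induction n.
- simpl. lra.
- assert (H := lemC y (S n) Hy).
  replace (2 * S (S n))%nat with (2 + 2 * S n)%nat by lia.
  rewrite pow_add. set (P := y ^ (2 * S n)) in *.
  repeat rewrite S_INR in *.
  replace (y ^ S n) with (y * y ^ n) in * by (simpl; ring).
  replace (y ^ 2) with (y * y) in * by ring.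
  set (a := y ^ n) in *.
  assert (0 <= y * y) by nra.
  assert (0 <= 1 - y * y) by nra.
  assert (A1 : y * y * ((INR n + 1) * a * (1 - y * y)) <= y * y * (1 - P)) by
    (apply Rmult_le_compat_l; auto).
  assert (A2 : (1 - y * y) * ((INR n + 1) * (y * a) * (1 - y)) <= (1 - y * y) * (1 - y * a)) by
    (apply Rmult_le_compat_l; auto).
  lra.
Qed.

Lemma lemL j : INR (S j) ^ 3 <= 16 ^ j.
Proof. induction j. simpl; lra.
repeat rewrite S_INR in *. replace (16 ^ S j) with (16 * 16 ^ j) by (simpl; ring).
assert (0 <= INR j) by apply pos_INR.
assert ((INR j + 1 + 1) ^ 3 <= 16 * (INR j + 1) ^ 3) by nra. lra. Qed.

Lemma div_le A B C D0 : 0 < B -> 0 < D0 -> A * D0 <= C * B -> A / B <= C / D0.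
Proof. intros. replace (A/B) with ((A*D0) * / (B*D0)) by (field; lra).
replace (C/D0) with ((C*B) * / (B*D0)) by (field; lra).
apply Rmult_le_compat_r; auto. left; apply Rinv_0_lt_compat; nra. Qed.

Lemma E_pow t n : exp (- t * INR n) = exp (- t) ^ n.
Proof. rewrite <- exp_INR. f_equal. Qed.



Lemma F_le n t : (1 <= n)%nat -> 0 < t -> F n t <= F 1 t.
Proof. intros Hn Ht. destruct n as [|j]; [lia|].
set (y := exp (- t / 2)).
assert (Hy0 : 0 < y) by apply exp_pos.
assert (Hy1 : y < 1) by (unfold y; rewrite <- exp_0; apply exp_increasing; lra).
assert (HE : forall m, exp (- t * INR m) = y ^ (2 * m)).
{ intro m. unfold y. rewrite <- exp_INR. f_equal. rewrite mult_INR. simpl INR. field. }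
unfold F. rewrite !HE.
assert (A := lemA y j ltac:(lra)).
assert (0 <= INR (S j) * y ^ j * (1 - y ^ 2)).
{ apply Rmult_le_pos. apply Rmult_le_pos. apply pos_INR. apply pow_le; lra. 
  assert (y ^ 2 < 1) by nra. lra. }
assert (Hsq : (INR (S j) * y ^ j * (1 - y ^ 2)) ^ 2 <= (1 - y ^ (2 * S j)) ^ 2) by (apply pow_incr; lra).
assert (Hu : y ^ (2 * S j) < 1).
{ apply pow_lt_1_compat; [lra|lia]. }
assert (Hu0 : 0 < y ^ (2 * S j)) by (apply pow_lt; lra).
assert (Hx : y ^ (2 * 1) < 1) by (simpl; nra).
apply div_le.
- apply pow_lt; lra.
- apply pow_lt; lra.
- replace (y ^ (2 * S j)) with (y ^ 2 * (y ^ j) ^ 2) at 1 by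
    (rewrite <- pow_mult, <- pow_add; f_equal; lia).
  replace (y ^ (2 * 1)) with (y ^ 2) by (f_equal).
  change (INR 1) with 1.
  assert (0 <= y ^ 2) by (apply pow_le; lra).
  assert (y ^ 2 * (INR (S j) * y ^ j * (1 - y ^ 2)) ^ 2 <= y ^ 2 * (1 - y ^ (2 * S j)) ^ 2)
    by (apply Rmult_le_compat_l; auto).
  replace (1 ^ 2 * y ^ 2 * (1 - y ^ (2 * S j)) ^ 2) with (y ^ 2 * (1 - y ^ (2 * S j)) ^ 2) by ring.
  replace (INR (S j) ^ 2 * (y ^ 2 * (y ^ j) ^ 2) * (1 - y ^ 2) ^ 2) with
     (y ^ 2 * (INR (S j) * y ^ j * (1 - y ^ 2)) ^ 2) by ring.
  auto.
Qed.

Lemma x_small c : 4 * ln 2 < c -> exp (- c) < / 16.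
Proof. intros H. replace (/16) with (exp (ln (/16))) by (apply exp_ln; lra).
apply exp_increasing. rewrite ln_Rinv by lra.
replace 16 with (2 ^ 4) by ring. rewrite ln_pow by lra. simpl INR. lra. Qed.

Lemma D_le n c : (1 <= n)%nat -> 4 * ln 2 < c -> D 1 c <= D n c.
Proof. intros Hn Hc. destruct n as [|j]; [lia|].
assert (Hl : 0 < ln 2) by (rewrite <- ln_1; apply ln_increasing; lra).
set (x := exp (- c)).
assert (Hx0 : 0 < x) by apply exp_pos.
assert (Hx1 : x < / 16) by apply (x_small c Hc).
unfold D. rewrite !E_pow. fold x.
set (p := x ^ j).
assert (Hp0 : 0 < p) by (apply pow_lt; lra).
assert (Hp1 : INR (S j) ^ 3 * p <= 1).
{ apply Rle_trans with (16 ^ j * (/ 16) ^ j).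
  - apply Rmult_le_compat. apply pow_le, pos_INR. lra. apply lemL. apply pow_incr; lra.
  - rewrite <- Rpow_mult_distr. replace (16 * / 16) with 1 by field. rewrite pow1; lra. }
assert (Hn3 : 1 <= INR (S j) ^ 3).
{ rewrite <- (pow1 3). apply pow_incr. split. lra. apply (le_INR 1); lia. }
assert (Hp : p <= 1) by nra.
replace (x ^ S j) with (x * p) by (unfold p; simpl; ring).
change (INR 1) with 1. rewrite pow1.
set (u := x * p).
assert (Hu0 : 0 < u) by (apply Rmult_lt_0_compat; lra).
assert (Hux : u <= x) by (unfold u; nra).
cut (INR (S j) ^ 3 * (u * (1 + u)) / (1 - u) ^ 3 <= 1 * (x * (1 + x)) / (1 - x) ^ 3).
{ intros HH. rewrite pow_1. unfold Rdiv in *. lra. }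
apply div_le.
- apply pow_lt; lra.
- apply pow_lt; lra.
- assert (H1 : (1 - x) ^ 3 <= (1 - u) ^ 3) by (apply pow_incr; lra).
  assert (0 < (1 - x) ^ 3) by (apply pow_lt; lra).
  assert (H2 : INR (S j) ^ 3 * (u * (1 + u)) = (INR (S j) ^ 3 * p) * (x * (1 + u))) by (unfold u; ring).
  rewrite H2.
  apply Rle_trans with (1 * (x * (1 + u)) * (1 - x) ^ 3).
  + apply Rmult_le_compat_r; [lra|]. apply Rmult_le_compat_r; [nra|]. auto.
  + apply Rmult_le_compat. nra. lra. nra. auto.
Qed.

Lemma sum_le (f1 f2 : nat -> R) k : (forall j, f1 (S j) <= f2 (S j)) -> sum_1_to f1 k <= sum_1_to f2 k.
Proof. intros H. induction k; simpl. lra. specialize (H k). lra. Qed.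

Lemma g_sum k t : g k t = sum_1_to (fun j => F j t - F 1 t) k.
Proof.
assert (forall k, sum_1_to (fun j => F j t - F 1 t) k = sum_1_to (fun j => F j t) k - INR k * F 1 t).
{ induction k0; simpl sum_1_to. simpl; ring. rewrite IHk0, S_INR. ring. }
rewrite H. unfold g. fold (F 0). change (sum_1_to (fun j => INR j ^ 2 * exp (- t * INR j) / (1 - exp (- t * INR j)) ^ 2) k) with (sum_1_to (fun j => F j t) k).
replace (F 1 t) with (exp (- t) / (1 - exp (- t)) ^ 2) by (unfold F; change (INR 1) with 1; rewrite Rmult_1_r; unfold Rdiv; ring). unfold Rdiv. ring.
Qed.

Lemma term_mono n t1 t2 : (1 <= n)%nat -> 4 * ln 2 < t1 -> t1 <= t2 ->
  F n t1 - F 1 t1 <= F n t2 - F 1 t2.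
Proof. intros Hn H1 H2.
assert (Hl : 0 < ln 2) by (rewrite <- ln_1; apply ln_increasing; lra).
destruct H2 as [H2|H2]; [|subst; lra].
destruct (MVT_cor2 (fun t => F n t - F 1 t) (fun t => D n t - D 1 t) t1 t2 H2) as [c [Hc1 Hc2]].
{ intros c Hc. apply (derivable_pt_lim_minus (F n) (F 1)); apply F_deriv; auto; lra. }
assert (D 1 c <= D n c) by (apply D_le; auto; lra).
assert (0 <= (D n c - D 1 c) * (t2 - t1)) by (apply Rmult_le_pos; lra).
lra.
Qed.

Theorem mainTheorem5 :
  (forall (k : nat) (theta : R), (1 <= k)%nat -> 4 * ln 2 < theta ->
     g k theta <= 0) /\
  (forall (k : nat) (t1 t2 : R), (1 <= k)%nat -> 4 * ln 2 < t1 -> t1 <= t2 ->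
     g k t1 <= g k t2) /\
  (forall (k : nat) (theta : R), (1 <= k)%nat -> 0 < theta ->
     g (S k) theta <= g k theta).
Proof.
assert (Hl : 0 < ln 2) by (rewrite <- ln_1; apply ln_increasing; lra).
split; [|split].
- intros k t _ Ht. rewrite g_sum.
  replace 0 with (sum_1_to (fun _ => 0) k) by (induction k; simpl; lra).
  apply sum_le. intro j. assert (F (S j) t <= F 1 t) by (apply F_le; lia || lra). lra.
- intros k t1 t2 _ H1 H2. rewrite !g_sum. apply sum_le. intro j. apply term_mono; auto; lia.
- intros k t _ Ht. rewrite !g_sum. simpl sum_1_to.
  assert (F (S k) t <= F 1 t) by (apply F_le; lia || lra). lra.
Qed.
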